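(* Let $V(\tilde{\Lambda})$ be a finite-dimensional irreducible $gl(m|n+1)$-module with highest weight $\tilde\Lambda$, equipped with its non-degenerate invariant sesquilinear form $\langle\,,\,\rangle$ (described in the context). Let $V_0(\tilde\Lambda)$ be its maximal $\mathbb{Z}$-graded component and put $W(\tilde{\Lambda}) = U(K_-)V_0(\tilde{\Lambda})$. If $0 \neq v_+ \in V(\tilde{\Lambda})$ is an $L$-maximal weight vector, then $\langle v_+, W(\tilde{\Lambda})\rangle \neq (0)$.
   Context: Work over $\mathbb{C}$. Let $N=m+n+1$ and set the parity $(p)=0$ for $1\le p\le m$ and $(p)=1$ for $m<p\le N$. The Lie superalgebra $\hat L=gl(m|n+1)$ has homogeneous basis $E_{pq}$ ($1\le p,q\le N$) of parity $(p)+(q)$ with graded bracket $[E_{pq},E_{rs}]=\delta_{qr}E_{ps}-(-1)^{((p)+(q))((r)+(s))}\delta_{ps}E_{rq}$. It has the $\mathbb{Z}$-grading $\hat L=\hat L_-\oplus\hat L_0\oplus\hat L_+$ with $\hat L_0=gl(m)\oplus gl(n+1)$ (the even part), $\hat L_+=\mathrm{span}\{E_{pq}: p\le m<q\}$, $\hat L_-=\mathrm{span}\{E_{qp}: p\le m<q\}$. Let $L=gl(m|n)\oplus gl(1)$ be the subalgebra spanned by $E_{pq}$ ($p,q\le m+n$) and $E_{NN}$, with induced grading $L=L_-\oplus L_0\oplus L_+$, $L_0=gl(m)\oplus gl(n)\oplus gl(1)$, $L_\pm=\hat L_\pm\cap L$; put $K_+=\mathrm{span}\{E_{iN}\}_{i=1}^m$,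 $K_-=\mathrm{span}\{E_{Ni}\}_{i=1}^m$, so $\hat L_\pm=L_\pm\oplus K_\pm$. $V(\tilde\Lambda)$ admits a $\mathbb{Z}$-gradation $V(\tilde\Lambda)=\bigoplus_{k=-d}^0V_k(\tilde\Lambda)$ whose top component $V_0(\tilde\Lambda)$ (the maximal $\mathbb{Z}$-graded component) is the irreducible $\hat L_0$-module generated by the highest weight vector. $V(\tilde\Lambda)$ carries a (unique) non-degenerate sesquilinear form $\langle\,,\,\rangle$ with $\langle v,w\rangle=\overline{\langle w,v\rangle}$ and $\langle av,w\rangle=\langle v,a^\dagger w\rangle$ for all $a\in\hat L$, where $\dagger$ is the conjugation with $(E_{pq})^\dagger=E_{qp}$. An $L$-maximal weight vector is a weight vector (for the Cartan subalgebra spanned by the $E_{pp}$) annihilated by all $E_{pq}$ with $p<q\le m+n$. *)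

(* Defs.v *)
From HB Require Import structures.
From mathcomp Require Import all_boot all_order all_algebra.
Set Implicit Arguments. Unset Strict Implicit. Unset Printing Implicit Defensive.
Import Order.TTheory GRing.Theory Num.Theory.
Local Open Scope ring_scope.

(* Indices 1..N of the paper are the ordinals 0..N-1 of 'I_N, N = m+n+1.
   A finite-dimensional gl(m|n+1)-module is modelled as C^d (column vectors)
   with rho p q the matrix by which E_{pq} acts. *)
Section Defs.
Variables (C : numClosedFieldType) (m n d : nat).
Local Notation N := (m + n).+1.

Definition par (p : 'I_N) : bool := (m <= p)%N.

Definition sgn (p q r s : 'I_N) : C :=
  (-1) ^+ ((par p (+) par q) && (par r (+) par s)).

Definition is_rep (rho : 'I_N -> 'I_N -> 'M[C]_d) : Prop :=
  forall p q r s : 'I_N,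
    rho p q *m rho r s - sgn p q r s *: (rho r s *m rho p q) =
    (q == r)%:R *: rho p s - (sgn p q r s * (p == s)%:R) *: rho r q.

Definition invariant_subspace (rho : 'I_N -> 'I_N -> 'M[C]_d)
    (P : 'cV[C]_d -> Prop) : Prop :=
  [/\ P 0, (forall u v, P u -> P v -> P (u + v)),
      (forall (a : C) u, P u -> P (a *: u)) &
      (forall p q u, P u -> P (rho p q *m u))].

Definition irreducible_rep (rho : 'I_N -> 'I_N -> 'M[C]_d) : Prop :=
  (0 < d)%N /\
  forall P, invariant_subspace rho P -> (exists2 v, v != 0 & P v) ->
    forall v, P v.

Definition highest_weight_vector (rho : 'I_N -> 'I_N -> 'M[C]_d)
    (Lam : 'I_N -> C) (v : 'cV[C]_d) : Prop :=
  [/\ v != 0, (forall p, rho p p *m v = Lam p *: v) &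
      (forall p q : 'I_N, (p < q)%N -> rho p q *m v = 0)].

(* Convention: linear in the second argument (antilinear in the first
   follows from conjugate symmetry). *)
Definition contravariant_form (rho : 'I_N -> 'I_N -> 'M[C]_d)
    (f : 'cV[C]_d -> 'cV[C]_d -> C) : Prop :=
  [/\ (forall u v w (a : C), f u (a *: v + w) = a * f u v + f u w),
      (forall u v, f u v = (f v u)^*),
      (forall u, (forall v, f u v = 0) -> u = 0) &
      (forall p q u v, f (rho p q *m u) v = f u (rho q p *m v))].

Definition L_maximal_weight_vector (rho : 'I_N -> 'I_N -> 'M[C]_d)
    (v : 'cV[C]_d) : Prop :=
  (exists mu : 'I_N -> C, forall p, rho p p *m v = mu p *: v) /\
  (forall p q : 'I_N, (p < q)%N -> (q < m + n)%N -> rho p q *m v = 0).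

(* V_0 = U(hat L_0) v_Lam : smallest subspace containing the highest weight
   vector and stable under the even part hat L_0 = span{E_pq : (p)=(q)} *)
Inductive in_V0 (rho : 'I_N -> 'I_N -> 'M[C]_d) (vL : 'cV[C]_d)
    : 'cV[C]_d -> Prop :=
  | V0_hw : in_V0 rho vL vL
  | V0_add u v : in_V0 rho vL u -> in_V0 rho vL v -> in_V0 rho vL (u + v)
  | V0_scale (a : C) u : in_V0 rho vL u -> in_V0 rho vL (a *: u)
  | V0_act (p q : 'I_N) u : par p = par q -> in_V0 rho vL u ->
      in_V0 rho vL (rho p q *m u).

(* W = U(K_-) V_0, K_- = span{E_{N i} : i <= m} (1-based) *)
Inductive in_W (rho : 'I_N -> 'I_N -> 'M[C]_d) (vL : 'cV[C]_d)
    : 'cV[C]_d -> Prop :=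
  | W_V0 u : in_V0 rho vL u -> in_W rho vL u
  | W_add u v : in_W rho vL u -> in_W rho vL v -> in_W rho vL (u + v)
  | W_scale (a : C) u : in_W rho vL u -> in_W rho vL (a *: u)
  | W_act (i : 'I_N) u : (i < m)%N -> in_W rho vL u ->
      in_W rho vL (rho ord_max i *m u).

End Defs.

(* Main.v *)
From Stdlib Require Import Classical.
Require Import Defs.
From HB Require Import structures.
From mathcomp Require Import all_boot all_order all_algebra.
Import Order.TTheory GRing.Theory Num.Theory.
Local Open Scope ring_scope.

Section Proof.
Variables (C : numClosedFieldType) (m n d : nat).
Local Notation I := 'I_(m + n).+1.
Variables (rho : I -> I -> 'M[C]_d) (Lam : I -> C) (vL : 'cV[C]_d).
Hypothesis Hrep : is_rep rho.
Hypothesis Hhw : highest_weight_vector rho Lam vL.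

Lemma rep_apply (p q r s : I) (u : 'cV[C]_d) :
  rho p q *m (rho r s *m u) = sgn C p q r s *: (rho r s *m (rho p q *m u))
    + ((q == r)%:R *: (rho p s *m u) - (sgn C p q r s * (p == s)%:R) *: (rho r q *m u)).
Proof.
have E := Hrep p q r s.
move/eqP: E; rewrite subr_eq => /eqP E.
rewrite !mulmxA E mulmxDl mulmxBl -!scalemxAl addrC.
done.
Qed.

Lemma V0_kill u : in_V0 rho vL u ->
  forall p q : I, (p < m)%N -> (m <= q)%N -> rho p q *m u = 0.
Proof.
elim => [|u1 v1 _ Hu _ Hv|a u1 _ Hu|a b u1 Hab _ Hu] p q Hp Hq.
- case: Hhw => _ _ H; apply: H; exact: leq_trans Hp Hq.
- by rewrite mulmxDr Hu // Hv // addr0.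
- by rewrite -scalemxAr Hu // scaler0.
rewrite rep_apply Hu // mulmx0 scaler0 add0r.
have T1 : (q == a)%:R *: (rho p b *m u1) = 0.
  have [Eq|_] := eqVneq q a; last by rewrite scale0r.
  subst q; rewrite Hu ?scaler0 //.
  move: Hab; rewrite /par => <-; exact: Hq.
have T2 : (sgn C p q a b * (p == b)%:R) *: (rho a q *m u1) = 0.
  have [Eq|_] := eqVneq p b; last by rewrite mulr0 scale0r.
  subst p; rewrite Hu ?scaler0 //.
  have Hb : (m <= b)%N = false by rewrite leqNgt Hp.
  move: Hab; rewrite /par Hb => Hab.
  by rewrite ltnNge Hab.
by rewrite T1 T2 subr0.
Qed.

Definition Bc (a b : I) : bool := (b <= a)%N && ((a < m + n)%N || (a == b)).

Inductive SP : 'cV[C]_d -> Prop :=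
  | SP_W u : in_W rho vL u -> SP u
  | SP_add u v : SP u -> SP v -> SP (u + v)
  | SP_scale (a : C) u : SP u -> SP (a *: u)
  | SP_act a b u : Bc a b -> SP u -> SP (rho a b *m u).

Lemma SP0 : SP 0.
Proof. rewrite -(scale0r vL); apply: SP_W; apply: W_V0; apply: V0_scale; exact: V0_hw. Qed.

Lemma SP_delta (b : bool) (c : C) v : (b -> SP v) -> SP ((c * b%:R) *: v).
Proof.
case: b => H; first by rewrite mulr1; apply: SP_scale; apply: H.
by rewrite mulr0 scale0r; exact: SP0.
Qed.

Lemma SP_delta1 (b : bool) v : (b -> SP v) -> SP (b%:R *: v).
Proof. by move=> H; rewrite -(mul1r b%:R); apply: SP_delta. Qed.

Lemma SP_comb s (b1 b2 : bool) c2 x y z : SP x -> (b1 -> SP y) -> (b2 -> SP z) ->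
  SP (s *: x + (b1%:R *: y - (c2 * b2%:R) *: z)).
Proof.
move=> Hx Hy Hz; apply: SP_add; first exact: SP_scale.
apply: SP_add; first exact: SP_delta1.
rewrite -scaleNr -mulNr; exact: SP_delta.
Qed.

Lemma SP_K u : SP u -> forall i : I, (i < m)%N -> SP (rho ord_max i *m u).
Proof.
elim => [u1 Hu|u1 v1 _ Hu _ Hv|a u1 _ Hu|a b u1 Hab _ Hu] i Hi.
- by apply: SP_W; apply: W_act.
- by rewrite mulmxDr; apply: SP_add; [apply: Hu|apply: Hv].
- by rewrite -scalemxAr; apply: SP_scale; apply: Hu.
rewrite rep_apply; apply: SP_comb.
- by apply: SP_act => //; apply: Hu.
- move=> /eqP Eia; subst a; apply: Hu.
  by move: Hab => /andP [Hb _]; exact: leq_ltn_trans Hb Hi.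
- move=> /eqP Eb; subst b.
  have -> : a = ord_max.
    apply/val_inj; move: Hab => /andP [Hb _] /=.
    by apply/eqP; rewrite eqn_leq Hb -ltnS ltn_ord.
  exact: Hu.
Qed.

Lemma SP_V0 u : in_V0 rho vL u -> forall a b : I, SP (rho a b *m u).
Proof.
move=> Hu a b.
have [Hab|Hab] := eqVneq (par a) (par b).
  by apply: SP_W; apply: W_V0; apply: V0_act.
move: Hab; rewrite /par.
case: (leqP m a) => Ha; case: (leqP m b) => Hb //= _.
- have [Ea|Ea] := eqVneq a ord_max.
    by subst a; apply: SP_W; apply: W_act => //; apply: W_V0.
  apply: SP_act; last by apply: SP_W; apply: W_V0.
  rewrite /Bc (ltnW (leq_trans Hb Ha)) /=.
  have : (a < (m + n).+1)%N := ltn_ord a.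
  rewrite ltnS leq_eqVlt => /orP [/eqP E|->] //.
  by case/eqP: Ea; apply/val_inj.
- by rewrite V0_kill //; exact: SP0.
Qed.

Lemma SP_W_inv u : in_W rho vL u -> forall a b : I, SP (rho a b *m u).
Proof.
elim => [u1 Hu|u1 v1 _ Hu _ Hv|c u1 _ Hu|i u1 Hi _ Hu] a b.
- exact: SP_V0.
- by rewrite mulmxDr; apply: SP_add; [apply: Hu|apply: Hv].
- by rewrite -scalemxAr; apply: SP_scale; apply: Hu.
rewrite rep_apply; apply: SP_comb.
- exact: SP_K.
- by move=> _; apply: Hu.
- by move=> _; apply: Hu.
Qed.

Lemma SP_inv u : SP u -> forall a b : I, SP (rho a b *m u).
Proof.
elim => [u1 Hu|u1 v1 _ Hu _ Hv|c u1 _ Hu|c e u1 Hce _ Hu] a b.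
- exact: SP_W_inv.
- by rewrite mulmxDr; apply: SP_add; [apply: Hu|apply: Hv].
- by rewrite -scalemxAr; apply: SP_scale; apply: Hu.
rewrite rep_apply; apply: SP_comb.
- exact: SP_act.
- by move=> _; apply: Hu.
- by move=> _; apply: Hu.
Qed.

End Proof.

Theorem lemma1 (C : numClosedFieldType) (m n d : nat)
  (rho : 'I_(m + n).+1 -> 'I_(m + n).+1 -> 'M[C]_d)
  (Lam : 'I_(m + n).+1 -> C) (vL : 'cV[C]_d)
  (form : 'cV[C]_d -> 'cV[C]_d -> C) (vp : 'cV[C]_d) :
  is_rep rho -> irreducible_rep rho -> highest_weight_vector rho Lam vL ->
  contravariant_form rho form ->
  vp != 0 -> L_maximal_weight_vector rho vp ->
  exists2 w, in_W rho vL w & form vp w != 0.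
Proof.
move=> Hrep [_ Hirr] Hhw [Hlin Hsym Hnd Hadj] Hvp [[mu Hmu] Hmax].
apply: NNPP => Hno.
have HW : forall w, in_W rho vL w -> form vp w = 0.
  move=> w Hw; apply/eqP; apply/negPn/negP => Hne; apply: Hno; by exists w.
have f0 : forall u, form u 0 = 0.
  move=> u; have := Hlin u 0 0 1; rewrite scale1r addr0 mul1r => H.
  by apply: (addrI (form u 0)); rewrite addr0 -H.
have fS : forall u, SP C m n d rho vL u -> form vp u = 0.
  move=> u Hu0; elim: Hu0 => [u1 Hu|u1 v1 _ Hu _ Hv|c u1 _ Hu|a b u1 Hab _ Hu].
  - exact: HW.
  - by have := Hlin vp u1 v1 1; rewrite scale1r mul1r Hu Hv addr0.
  - by have := Hlin vp u1 0 c; rewrite addr0 Hu f0 mulr0 addr0.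
  rewrite -Hadj.
  move: Hab => /andP [Hba /orP [Ha|/eqP Eab]].
    move: Hba; rewrite leq_eqVlt => /orP [/eqP Eab|Hlt].
      have -> : b = a by apply/val_inj.
      rewrite Hmu Hsym.
      have := Hlin u1 vp 0 (mu a); rewrite addr0 f0 addr0 => ->.
      by rewrite Hsym Hu conjC0 mulr0 conjC0.
    by rewrite Hmax // Hsym f0 conjC0.
  subst b; rewrite Hmu Hsym.
  have := Hlin u1 vp 0 (mu a); rewrite addr0 f0 addr0 => ->.
  by rewrite Hsym Hu conjC0 mulr0 conjC0.
have Hall : forall v, SP C m n d rho vL v.
  apply: Hirr.
  - split; [exact: (SP0 C m n d rho vL) | exact: (@SP_add C m n d rho vL) | exact: (@SP_scale C m n d rho vL) |].
    move=> p q u Hu; have H := @SP_inv C m n d rho Lam vL Hrep Hhw u Hu p q; exact H.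
  - exists vL; first by case: Hhw.
    by apply: SP_W; apply: W_V0; apply: V0_hw.
have E0 : vp = 0 := Hnd vp (fun v => fS v (Hall v)).
by move: Hvp; rewrite E0 eqxx.
Qed.
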